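(* Let $\alpha<\tfrac12$. For every $k\in\mathbb N$ and every $\varepsilon>0$, $\widetilde\varphi_k(x)=O(x^\varepsilon)$ as $x\to\infty$.
   Context: $\mathrm m(x):=x^{1-4\alpha}e^{-1/(2x^2)}$ for $x>0$. The canonical $*$-moment functions are defined recursively by $\widetilde\varphi_{-1}:\equiv0$, $\widetilde\varphi_0:\equiv1$ and, for $k\in\mathbb N$ and $x\ge0$, $$\widetilde\varphi_k(x):=4k\int_0^x\frac1{y^2\mathrm m(y)}\int_0^y\mathrm m(\xi)\bigl[(1-2\alpha)\widetilde\varphi_{k-1}(\xi)+(k-1)\widetilde\varphi_{k-2}(\xi)\bigr]d\xi\,dy.$$ *)

(* Defs.v *)
From Stdlib Require Import Reals ClassicalEpsilon.
Open Scope R_scope.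

(* Total Riemann integral: RiemannInt when f is Riemann integrable on [a,b],
   0 otherwise (RiemannInt does not depend on the integrability proof). *)
Definition Rint (f : R -> R) (a b : R) : R :=
  match excluded_middle_informative (exists p : Riemann_integrable f a b, True) with
  | left H => RiemannInt (proj1_sig (constructive_indefinite_description _ H))
  | right _ => 0
  end.

Definition mfun (alpha x : R) : R :=
  Rpower x (1 - 4 * alpha) * exp (- / (2 * x ^ 2)).

(* phi_pair alpha k = (phi_{k-1}, phi_k) *)
Fixpoint phi_pair (alpha : R) (k : nat) : (R -> R) * (R -> R) :=
  match k with
  | O => (fun _ => 0, fun _ => 1)
  | S j =>
      let (p, q) := phi_pair alpha j in
      (q, fun x => 4 * INR (S j) *
            Rint (fun y => / (y ^ 2 * mfun alpha y) *
                    Rint (fun xi => mfun alpha xi *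
                            ((1 - 2 * alpha) * q xi + INR j * p xi)) 0 y) 0 x)
  end.

Definition phi (alpha : R) (k : nat) : R -> R := snd (phi_pair alpha k).

(* Main.v *)
Require Import Defs.
From Stdlib Require Import Reals Lra ClassicalEpsilon.
From Coquelicot Require Import Coquelicot.
Open Scope R_scope.

Lemma int_bound (f G g : R -> R) (y : R) : 0 < y ->
  (forall t, 0 < t <= y -> is_derive G t (g t)) ->
  (forall t, 0 < t <= y -> continuous g t) ->
  (forall t, 0 < t <= y -> 0 <= G t) ->
  (forall t, 0 < t < y -> Rabs (f t) <= g t) ->
  Rabs (Rint f 0 y) <= G y.
Proof.
  intros Hy HG Hg HG0 Hf.
  unfold Rint. destruct excluded_middle_informative as [H|H].
  2:{ rewrite Rabs_R0. apply HG0; lra. }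
  set (pr := proj1_sig _).
  rewrite <- RInt_Reals.
  assert (Hex : ex_RInt f 0 y) by (apply ex_RInt_Reals_1; exact pr).
  destruct (ex_RInt_ub f 0 y Hex) as [M HM].
  assert (HM0 : 0 <= M).
  { apply Rle_trans with (norm (f 0)). apply norm_ge_0. apply HM.
    rewrite Rmin_left, Rmax_right; lra. }
  assert (key : forall a, 0 < a < y -> Rabs (RInt f 0 y) <= a * M + G y).
  { intros a Ha.
    assert (E1 : ex_RInt f 0 a) by (apply (ex_RInt_Chasles_1 f 0 a y); [lra|exact Hex]).
    assert (E2 : ex_RInt f a y) by (apply (ex_RInt_Chasles_2 f 0 a y); [lra|exact Hex]).
    rewrite <- (RInt_Chasles f 0 a y E1 E2).
    assert (Hg' : is_RInt g a y (minus (G y) (G a))).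
    { apply (is_RInt_derive G g a y).
      - intros t Ht. rewrite Rmin_left in Ht by lra. rewrite Rmax_right in Ht by lra.
        apply HG; lra.
      - intros t Ht. rewrite Rmin_left in Ht by lra. rewrite Rmax_right in Ht by lra.
        apply Hg; lra. }
    assert (B1 : Rabs (RInt f 0 a) <= (a - 0) * M).
    { apply abs_RInt_le_const; try lra; auto.
      intros t Ht. apply HM. rewrite Rmin_left, Rmax_right; lra. }
    assert (B2 : Rabs (RInt f a y) <= G y - G a).
    { eapply Rle_trans. apply abs_RInt_le. lra. exact E2.
      replace (G y - G a) with (RInt g a y).
      apply RInt_le. lra. apply (ex_RInt_norm f a y E2).
      exists (minus (G y) (G a)); exact Hg'.
      intros t Ht. apply Hf; lra.
      rewrite (is_RInt_unique g a y _ Hg'). reflexivity. }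
    unfold plus; simpl.
    assert (0 <= G a) by (apply HG0; lra).
    eapply Rle_trans. apply Rabs_triang. lra. }
  destruct (Rle_dec (Rabs (RInt f 0 y)) (G y)) as [Hle|Hlt]; [exact Hle|].
  exfalso. apply Rnot_le_lt in Hlt.
  set (d := Rabs (RInt f 0 y) - G y).
  set (a := Rmin (y/2) (d / (2 * (M + 1)))).
  assert (Ha0 : 0 < a).
  { unfold a. apply Rmin_case. lra. apply Rdiv_lt_0_compat; unfold d; lra. }
  assert (Ha1 : a <= d / (2 * (M+1))) by apply Rmin_r.
  assert (Ha2 : a <= y/2) by apply Rmin_l.
  specialize (key a ltac:(lra)).
  assert (a * M <= d / 2).
  { apply Rle_trans with (d / (2 * (M + 1)) * (M+1)).
    apply Rmult_le_compat; lra.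
    right. field. lra. }
  unfold d in *. lra.
Qed.

Definition ee (c t : R) := exp (c * ln t - / (2 * t ^ 2)).

Lemma ee_derive c t : 0 < t -> is_derive (ee c) t (ee c t * (c / t + / t ^ 3)).
Proof.
  intros Ht. unfold ee. auto_derive.
  - repeat split; try lra; nra.
  - replace (c * ln t + - / (2 * (t * (t * 1)))) with (c * ln t - / (2 * t ^ 2)) by (simpl; ring). field. lra.
Qed.

Lemma ee_cont c t H : 0 < t -> continuous (fun t => H * (ee c t * (c / t + / t ^ 3))) t.
Proof.
  intros Ht. apply (ex_derive_continuous (K:=R_AbsRing) (V:=R_NormedModule)). unfold ee. auto_derive.
  repeat split; try lra; try nra; apply Rgt_not_eq; apply Rmult_lt_0_compat; nra.
Qed.

Lemma mfun_ee alpha t : 0 < t -> mfun alpha t = ee (1 - 4*alpha) t.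
Proof. intros Ht. unfold mfun, ee, Rpower. rewrite <- exp_plus. f_equal. Qed.

Lemma ee_shift c n t : 0 < t -> ee (c + INR n) t = ee c t * t ^ n.
Proof. intros Ht. unfold ee. rewrite <- (Rpower_pow n t Ht). unfold Rpower. rewrite <- exp_plus. f_equal. ring. Qed.

Lemma ee_pos c t : 0 < ee c t.
Proof. apply exp_pos. Qed.

Lemma inner_bound alpha (h : R -> R) H y : alpha < 1/2 -> 0 < y -> 0 <= H ->
  (forall t, 0 < t < y -> Rabs (h t) <= H) ->
  Rabs (Rint (fun xi => mfun alpha xi * h xi) 0 y) <=
    H * y ^ 2 * mfun alpha y * (2 + 2 / (2 - 4 * alpha)) / (1 + y).
Proof.
  intros Ha Hy HH Hh.
  set (b := 1 - 4 * alpha).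
  assert (Hb : 0 < 1 + b) by (unfold b; lra).
  assert (Hm : forall t, 0 < t < y -> Rabs (mfun alpha t * h t) <= H * ee b t).
  { intros t Ht. rewrite Rabs_mult, mfun_ee by lra. rewrite Rabs_pos_eq by (left; apply ee_pos).
    rewrite Rmult_comm. apply Rmult_le_compat_r. left; apply ee_pos. apply Hh; lra. }
  assert (B1 : Rabs (Rint (fun xi => mfun alpha xi * h xi) 0 y) <= H * ee (b + 3) y).
  { apply int_bound with (G := fun t => H * ee (b+3) t) (g := fun t => H * (ee (b+3) t * ((b+3) / t + / t ^ 3))).
    - exact Hy.
    - intros t Ht. apply is_derive_scal. apply ee_derive. lra.
    - intros t Ht. apply ee_cont. lra.
    - intros t Ht. apply Rmult_le_pos. lra. left; apply ee_pos.
    - intros t Ht. eapply Rle_trans. apply Hm. exact Ht.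
      replace (b + 3) with (b + INR 3) by (simpl; ring).
      rewrite ee_shift by lra. simpl INR.
      assert (0 < ee b t) by apply ee_pos.
      replace (H * (ee b t * t ^ 3 * ((b + (1 + 1 + 1)) / t + / t ^ 3)))
        with (H * ee b t * ((b + 3) * t ^ 2 + 1)) by (field; lra).
      rewrite <- (Rmult_1_r (H * ee b t)) at 1.
      apply Rmult_le_compat_l. apply Rmult_le_pos; lra.
      assert (0 <= (b+3) * t ^ 2). apply Rmult_le_pos. lra. apply pow_le; lra. lra. }
  assert (B2 : Rabs (Rint (fun xi => mfun alpha xi * h xi) 0 y) <= H / (1 + b) * ee (b + 1) y).
  { apply int_bound with (G := fun t => H / (1 + b) * ee (b+1) t) (g := fun t => H / (1 + b) * (ee (b+1) t * ((b+1) / t + / t ^ 3))).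
    - exact Hy.
    - intros t Ht. apply is_derive_scal. apply ee_derive. lra.
    - intros t Ht. apply ee_cont. lra.
    - intros t Ht. apply Rmult_le_pos. apply Rdiv_le_0_compat; lra. left; apply ee_pos.
    - intros t Ht. eapply Rle_trans. apply Hm. exact Ht.
      replace (b + 1) with (b + INR 1) by (simpl; ring).
      rewrite ee_shift by lra. simpl INR.
      assert (0 < ee b t) by apply ee_pos.
      replace (H / (1 + b) * (ee b t * t ^ 1 * ((b + 1) / t + / t ^ 3)))
        with (H * ee b t * (1 + / ((1 + b) * t ^ 2))) by (field; lra).
      rewrite <- (Rmult_1_r (H * ee b t)) at 1.
      apply Rmult_le_compat_l. apply Rmult_le_pos; lra.
      assert (0 <= / ((1 + b) * t ^ 2)). left. apply Rinv_0_lt_compat. apply Rmult_lt_0_compat. lra. apply pow_lt; lra. lra. }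
  rewrite mfun_ee by lra. fold b.
  replace (2 - 4 * alpha) with (1 + b) by (unfold b; ring).
  assert (Hm0 : 0 < ee b y) by apply ee_pos.
  destruct (Rle_dec y 1) as [Hy1|Hy1].
  - eapply Rle_trans. apply B1.
    replace (b + 3) with (b + INR 3) by (simpl; ring).
    rewrite ee_shift by lra.
    replace (H * y ^ 2 * ee b y * (2 + 2 / (1 + b)) / (1 + y))
      with (H * ee b y * y ^ 2 * ((2 + 2 / (1 + b)) / (1 + y))) by (field; lra).
    replace (H * (ee b y * y ^ 3)) with (H * ee b y * y ^ 2 * y) by ring.
    apply Rmult_le_compat_l. apply Rmult_le_pos. apply Rmult_le_pos; lra. apply pow_le; lra.
    apply Rmult_le_reg_r with (1 + y). lra.
    unfold Rdiv. rewrite Rmult_assoc, Rinv_l, Rmult_1_r by lra.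
    assert (0 <= 2 * / (1 + b)) by (apply Rmult_le_pos; [lra| left; apply Rinv_0_lt_compat; lra]).
    nra.
  - eapply Rle_trans. apply B2.
    replace (b + 1) with (b + INR 1) by (simpl; ring).
    rewrite ee_shift by lra.
    replace (H * y ^ 2 * ee b y * (2 + 2 / (1 + b)) / (1 + y))
      with (H * ee b y * y * (y * (2 + 2 / (1 + b)) / (1 + y))) by (field; lra).
    replace (H / (1 + b) * (ee b y * y ^ 1)) with (H * ee b y * y * / (1 + b)) by (field; lra).
    apply Rmult_le_compat_l. apply Rmult_le_pos. apply Rmult_le_pos; lra. lra.
    apply Rmult_le_reg_r with ((1 + y) * (1 + b)). apply Rmult_lt_0_compat; lra.
    replace (/ (1 + b) * ((1 + y) * (1 + b))) with (1 + y) by (field; lra).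
    replace (y * (2 + 2 / (1 + b)) / (1 + y) * ((1 + y) * (1 + b))) with (2 * y * (1 + b) + 2 * y) by (field; lra).
    nra.
Qed.

Lemma pw_ge1 d t : 0 <= d -> 0 < t -> 1 <= Rpower (1 + t) d.
Proof. intros. rewrite <- (Rpower_O (1+t)) at 1 by lra. apply Rle_Rpower; lra. Qed.

Lemma pw_mono d s t : 0 <= d -> 0 < s <= t -> Rpower (1 + s) d <= Rpower (1 + t) d.
Proof. intros. apply Rle_Rpower_l; lra. Qed.

Lemma induct alpha d : alpha < 1/2 -> 0 < d -> forall j, exists A, 0 <= A /\
  forall t, 0 < t -> Rabs (fst (phi_pair alpha j) t) <= A * Rpower (1 + t) d /\
                     Rabs (snd (phi_pair alpha j) t) <= A * Rpower (1 + t) d.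
Proof.
  intros Ha Hd. induction j as [|j IH].
  - exists 1. split. lra. intros t Ht. simpl. rewrite Rabs_R0, Rabs_R1.
    pose proof (pw_ge1 d t ltac:(lra) Ht). lra.
  - destruct IH as [A [HA IH]].
    cbn [phi_pair]. destruct (phi_pair alpha j) as [p q] eqn:E. simpl in IH.
    set (D := (Rabs (1 - 2 * alpha) + INR j) * A).
    set (K := 2 + 2 / (2 - 4 * alpha)).
    assert (HK : 0 <= K). { unfold K. assert (0 < 2 / (2 - 4*alpha)) by (apply Rdiv_lt_0_compat; lra). lra. }
    assert (HD : 0 <= D). { unfold D. apply Rmult_le_pos; auto. pose proof (pos_INR j). pose proof (Rabs_pos (1 - 2*alpha)). lra. }
    set (A' := 4 * INR (S j) * (D * K / d)).
    assert (HA' : 0 <= A').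
    { unfold A'. apply Rmult_le_pos. pose proof (pos_INR (S j)); lra.
      apply Rdiv_le_0_compat. apply Rmult_le_pos; lra. lra. }
    exists (Rmax A A'). split. apply Rle_trans with A; [lra|apply Rmax_l].
    intros x Hx. cbn [fst snd]. split.
    + eapply Rle_trans. apply (IH x Hx). apply Rmult_le_compat_r.
      pose proof (pw_ge1 d x ltac:(lra) Hx); lra. apply Rmax_l.
    + eapply Rle_trans. 2:{ apply Rmult_le_compat_r.
        pose proof (pw_ge1 d x ltac:(lra) Hx); lra. apply Rmax_r. }
      rewrite Rabs_mult. rewrite (Rabs_pos_eq (4 * INR (S j))) by (pose proof (pos_INR (S j)); lra).
      unfold A'. rewrite !Rmult_assoc. apply Rmult_le_compat_l. lra.
      apply Rmult_le_compat_l. apply pos_INR.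
      replace (D * K / d * Rpower (1 + x) d) with ((D * K / d) * exp (d * ln (1 + x))) by reflexivity.
      apply int_bound with (G := fun t => D * K / d * exp (d * ln (1 + t)))
        (g := fun t => D * K / d * (exp (d * ln (1 + t)) * (d / (1 + t)))).
      * exact Hx.
      * intros t Ht. apply is_derive_scal. auto_derive. lra. field. lra.
      * intros t Ht. apply (ex_derive_continuous (K:=R_AbsRing) (V:=R_NormedModule)).
        auto_derive. repeat split; lra.
      * intros t Ht. apply Rmult_le_pos. apply Rdiv_le_0_compat. apply Rmult_le_pos; lra. lra.
        left; apply exp_pos.
      * intros y Hy.
        assert (Hh : forall t, 0 < t < y -> Rabs ((1 - 2 * alpha) * q t + INR j * p t) <= D * Rpower (1 + y) d).
        { intros t Ht. destruct (IH t ltac:(lra)) as [Hp Hq].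
          pose proof (pw_mono d t y ltac:(lra) ltac:(lra)).
          eapply Rle_trans. apply Rabs_triang. rewrite !Rabs_mult.
          rewrite (Rabs_pos_eq (INR j)) by apply pos_INR.
          unfold D.
          apply Rle_trans with ((Rabs (1 - 2 * alpha) + INR j) * (A * Rpower (1 + t) d)).
          { pose proof (Rabs_pos (1 - 2*alpha)). pose proof (pos_INR j).
            apply Rle_trans with (Rabs (1 - 2 * alpha) * (A * Rpower (1 + t) d) + INR j * (A * Rpower (1 + t) d)).
            apply Rplus_le_compat; apply Rmult_le_compat_l; auto. lra. }
          rewrite Rmult_assoc. apply Rmult_le_compat_l.
          pose proof (Rabs_pos (1 - 2*alpha)). pose proof (pos_INR j). lra.
          apply Rmult_le_compat_l; lra. }
        pose proof (inner_bound alpha (fun xi => (1 - 2 * alpha) * q xi + INR j * p xi)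
                      (D * Rpower (1 + y) d) y Ha (proj1 Hy)
                      ltac:(apply Rmult_le_pos; [lra| pose proof (pw_ge1 d y ltac:(lra) (proj1 Hy)); lra]) Hh) as HI.
        fold K in HI.
        assert (Hmy : 0 < mfun alpha y) by (rewrite mfun_ee by lra; apply ee_pos).
        assert (Hy2 : 0 < y ^ 2 * mfun alpha y) by (apply Rmult_lt_0_compat; [apply pow_lt; lra| lra]).
        rewrite Rabs_mult, Rabs_pos_eq by (left; apply Rinv_0_lt_compat; lra).
        eapply Rle_trans. apply Rmult_le_compat_l. left; apply Rinv_0_lt_compat; lra. exact HI.
        right. change (Rpower (1 + y) d) with (exp (d * ln (1 + y))). field. repeat split; lra.
  Qed.

Theorem mainTheorem19 (alpha : R) (halpha : alpha < 1 / 2) (k : nat) (eps : R) (heps : 0 < eps) :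
  exists C M : R, 0 < M /\ forall x : R, M <= x -> Rabs (phi alpha k x) <= C * Rpower x eps.
Proof.
  destruct (induct alpha eps halpha heps k) as [A [HA H]].
  exists (A * Rpower 2 eps), 1. split. lra.
  intros x Hx. unfold phi. destruct (H x ltac:(lra)) as [_ H2].
  eapply Rle_trans. exact H2.
  rewrite Rmult_assoc. apply Rmult_le_compat_l. exact HA.
  rewrite Rpower_mult_distr by lra.
  apply Rle_Rpower_l; lra.
Qed.
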